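(* Let $G$ be a connected graph in $\mathcal{C}$ and $C$ an induced $C_5$ in $G$. Then $R$ is a clique, and every vertex of $R$ is adjacent to every vertex of $X$.
   Context: $\mathcal{C}=\mathrm{Free}(\text{claw}, 4K_1, \text{5-wheel}, C_5\text{-twin}, P_5\text{-twin}, K_5-e)$, where $\mathrm{Free}(L)$ is the class of graphs with no induced subgraph isomorphic to a member of $L$; the claw is $K_{1,3}$; $4K_1$ is the edgeless graph on 4 vertices; the 5-wheel is $C_5$ plus a vertex adjacent to all five cycle vertices; the $C_5$-twin is $C_5$ plus a new vertex adjacent to one cycle vertex $v$ and both cycle-neighbours of $v$; the $P_5$-twin is a path $p_1p_2p_3p_4p_5$ plus a new vertex adjacent to exactly $p_2,p_3,p_4$; $K_5-e$ is $K_5$ minus one edge. Given an induced cycle $C$ of length 5 with vertices $0,\dots,4$ in cyclic order (indices taken mod 5): $R$ is the set of vertices outside $C$ with no neighbour in $C$; $X_j$ is the set of vertices outside $C$ whose neighbourhood in $C$ is exactly $\{j,j+1\}$; $Y_j$ is the set of vertices outside $C$ whose neighbourhood in $C$ is exactly $\{j,j+1,j+2,j+3\}$; $X=\bigcup_j X_j$, $Y=\bigcup_j Y_j$. *)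

(* Defs.v *)
From mathcomp Require Import all_boot.
Set Implicit Arguments. Unset Strict Implicit. Unset Printing Implicit Defensive.

Definition simple_graph (T : finType) (e : rel T) : Prop :=
  symmetric e /\ irreflexive e.

Definition has_induced (T : finType) (e : rel T) (n : nat) (H : rel 'I_n) : Prop :=
  exists f : 'I_n -> T, injective f /\ forall i j, e (f i) (f j) = H i j.

Definition c5adj (i j : nat) : bool :=
  (j == (i.+1) %% 5) || (i == (j.+1) %% 5).

Definition claw : rel 'I_4 := fun i j =>
  (i != j) && ((val i == 0) || (val j == 0)).
Definition fourK1 : rel 'I_4 := fun _ _ => false.
Definition wheel5 : rel 'I_6 := fun i j =>
  if (val i < 5) && (val j < 5) then c5adj i j
  else (i != j).
Definition c5twin : rel 'I_6 := fun i j =>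
  if (val i < 5) && (val j < 5) then c5adj i j
  else if val i == 5 then (val j \in [:: 4; 0; 1])
  else (val i \in [:: 4; 0; 1]).
Definition p5twin : rel 'I_6 := fun i j =>
  if (val i < 5) && (val j < 5) then (val j == (val i).+1) || (val i == (val j).+1)
  else if val i == 5 then (val j \in [:: 1; 2; 3])
  else (val i \in [:: 1; 2; 3]).
Definition k5e : rel 'I_5 := fun i j =>
  (i != j) && ~~ ((val i <= 1) && (val j <= 1)).

Definition in_class (T : finType) (e : rel T) : Prop :=
  simple_graph e /\
  ~ has_induced e claw /\ ~ has_induced e fourK1 /\ ~ has_induced e wheel5 /\
  ~ has_induced e c5twin /\ ~ has_induced e p5twin /\ ~ has_induced e k5e.

Definition connected_graph (T : finType) (e : rel T) : Prop :=
  forall x y : T, connect e x y.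

Definition induced_C5 (T : finType) (e : rel T) (c : 'I_5 -> T) : Prop :=
  injective c /\ forall i j : 'I_5, e (c i) (c j) = c5adj i j.

Definition outside (T : finType) (c : 'I_5 -> T) (v : T) : bool :=
  [forall i, c i != v].

Definition setRC5 (T : finType) (e : rel T) (c : 'I_5 -> T) : {set T} :=
  [set v | outside c v & [forall i, ~~ e v (c i)]].

Definition setX_j (T : finType) (e : rel T) (c : 'I_5 -> T) (j : 'I_5) : {set T} :=
  [set v | outside c v &
     [forall i : 'I_5, e v (c i) == ((val i == val j) || (val i == (val j).+1 %% 5))]].

Definition setXC5 (T : finType) (e : rel T) (c : 'I_5 -> T) : {set T} :=
  \bigcup_(j : 'I_5) setX_j e c j.

(* Main.v *)
Require Import Defs.
From mathcomp Require Import all_boot.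

Lemma indep4 (T : finType) (e : rel T) (a b c d : T) :
  uniq [:: a; b; c; d] ->
  {in [:: a; b; c; d] &, forall x y, ~~ e x y} -> has_induced e fourK1.
Proof.
move=> Hu Hn.
exists (fun i : 'I_4 => nth a [:: a; b; c; d] i); split.
  move=> i j /eqP; rewrite nth_uniq ?(ltn_ord i) ?(ltn_ord j) //.
  by move/eqP/val_inj.
move=> i j; apply/negbTE; apply: Hn; apply: mem_nth; [exact: (ltn_ord i)|exact: (ltn_ord j)].
Qed.

Lemma core (T : finType) (e : rel T) (c : 'I_5 -> T) (u w : T) (p q : 'I_5) :
  in_class e -> induced_C5 e c -> u \in setRC5 e c -> outside c w -> u != w ->
  ~~ e u w -> ~~ e w (c p) -> ~~ e w (c q) -> p != q -> ~~ c5adj p q -> False.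
Proof.
move=> [[Hsym Hirr] [_ [H4 _]]] [Hci Hce] Hu Hw Huw Heuw Hwp Hwq Hpq Hcpq.
move: Hu; rewrite inE => /andP[/forallP Huo /forallP Hun].
move/forallP: Hw => Hwo.
apply: H4; apply: (@indep4 _ _ u w (c p) (c q)).
  rewrite /= !inE !negb_or Huw eq_sym (Huo p) eq_sym (Huo q) /=.
  rewrite eq_sym (Hwo p) eq_sym (Hwo q) /=.
  by rewrite (inj_eq Hci) Hpq.
have Hcpq' : ~~ e (c p) (c q) by rewrite Hce.
move=> x y; rewrite !inE => /or4P[]/eqP-> /or4P[]/eqP->;
  rewrite ?Hirr // ?Hun // 1?Hsym ?Hun //.
Qed.

Theorem mainTheorem12 (T : finType) (e : rel T) (c : 'I_5 -> T) :
  in_class e -> connected_graph e -> induced_C5 e c ->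
  (forall u v, u \in setRC5 e c -> v \in setRC5 e c -> u != v -> e u v) /\
  (forall u x, u \in setRC5 e c -> x \in setXC5 e c -> e u x).
Proof.
move=> Hcl _ HC; split.
  move=> u v Hu Hv Huv; apply/negPn/negP => Hn.
  have Hv' := Hv; move: Hv'; rewrite inE => /andP[Hvo /forallP Hvn].
  exact: (@core _ _ c u v (@Ordinal 5 0 isT) (@Ordinal 5 2 isT) Hcl HC Hu Hvo Huv Hn (Hvn _) (Hvn _) isT isT).
move=> u x Hu /bigcupP[j _]; rewrite inE => /andP[Hxo /forallP Hx].
have Hu' := Hu; move: Hu'; rewrite inE => /andP[_ /forallP Hun].
apply/negPn/negP => Hn.
have Hux : u != x.
  apply/eqP => Eux; move: (Hun j) (Hx j); rewrite Eux eqxx /= => /negbTE -> //.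
have F : forall k : 'I_5, ~~ ((val k == val j) || (val k == (val j).+1 %% 5)) -> ~~ e x (c k).
  by move=> k Hk; move/eqP: (Hx k) ->.
case: j Hx F => [[|[|[|[|[|j]]]]] Hj] //= Hx F.
- exact: (@core _ _ c u x (@Ordinal 5 2 isT) (@Ordinal 5 4 isT) Hcl HC Hu Hxo Hux Hn (F (@Ordinal 5 2 isT) isT) (F (@Ordinal 5 4 isT) isT) isT isT).
- exact: (@core _ _ c u x (@Ordinal 5 3 isT) (@Ordinal 5 0 isT) Hcl HC Hu Hxo Hux Hn (F (@Ordinal 5 3 isT) isT) (F (@Ordinal 5 0 isT) isT) isT isT).
- exact: (@core _ _ c u x (@Ordinal 5 4 isT) (@Ordinal 5 1 isT) Hcl HC Hu Hxo Hux Hn (F (@Ordinal 5 4 isT) isT) (F (@Ordinal 5 1 isT) isT) isT isT).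
- exact: (@core _ _ c u x (@Ordinal 5 0 isT) (@Ordinal 5 2 isT) Hcl HC Hu Hxo Hux Hn (F (@Ordinal 5 0 isT) isT) (F (@Ordinal 5 2 isT) isT) isT isT).
- exact: (@core _ _ c u x (@Ordinal 5 1 isT) (@Ordinal 5 3 isT) Hcl HC Hu Hxo Hux Hn (F (@Ordinal 5 1 isT) isT) (F (@Ordinal 5 3 isT) isT) isT isT).
Qed.
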